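(* Let $M^7=\mathbb CP^2\times S^3=(\mathrm{SU}_3/\mathrm U_2)\times\mathrm{SU}_2$ with an invariant Riemannian metric $g=g_4+g_3$, where $g_4$ is a positive multiple $a$ of the Fubini–Study metric and $g_3=\sum_{i=1}^3c_i\,\beta^i\otimes\beta^i$ ($c_i>0$) for a left-invariant coframe $\beta^1,\beta^2,\beta^3$ on $\mathrm{SU}_2$ with $d\beta^1=-\beta^2\wedge\beta^3$, $d\beta^2=-\beta^3\wedge\beta^1$, $d\beta^3=-\beta^1\wedge\beta^2$. Let $\mathrm{vol}_3=\sqrt{c_1c_2c_3}\,\beta^1\wedge\beta^2\wedge\beta^3$, let $\omega$ be the invariant Kähler form of $(\mathbb CP^2,g_4)$, $\mathrm{vol}_4$ the volume form of $g_4$ for the orientation in which $\omega$ is anti-self-dual, and orient $M^7$ by $\mathrm{vol}_4\wedge\mathrm{vol}_3$. Then the $(\mathrm{SU}_3\times\mathrm{SU}_2)$-invariant special 3-forms $\phi$ on $(M^7,g)$ (i.e. $d\star_7\phi=0$ and $d\phi=f\star_7\phi$ for a constant $f$) are exactly the following: - if $f=0$: $\phi=b\,\mathrm{vol}_3$ with $b$ constant; - if $f\neq0$: $\phi=\omega\wedge\theta$ with $\theta=\sum_i\theta_i\beta^i$ ($\theta_i$ constants) satisfying $\big(f-\sqrt{c_1/(c_2c_3)}\big)\theta_1=0$, $\big(f-\sqrt{c_2/(c_3c_1)}\big)\theta_2=0$, $\big(f-\sqrt{c_3/(c_1c_2)}\big)\theta_3=0$.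
   Context: Hodge star $\star_7$ of $(M^7,g)$ defined by $\alpha\wedge\star\beta=\langle\alpha,\beta\rangle\mathrm{vol}$ with $\langle\alpha,\beta\rangle=\frac1{k!}g(\alpha,\beta)$ on $k$-forms and $\mathrm{vol}=\mathrm{vol}_4\wedge\mathrm{vol}_3$. Every invariant 3-form on $M^7$ has the form $\omega\wedge\theta+b\,\mathrm{vol}_3$ with $\theta$ a left-invariant 1-form on $\mathrm{SU}_2$ and $b$ constant. *)

(* Defs.v *)
(* Pointwise (at a base point) model of the algebra of
   (SU3 x SU2)-invariant differential forms on M^7 = CP^2 x S^3.
   Coframe at the base point, indexed by 'I_7:
     0,1,2,3 : f^1..f^4, an orthonormal coframe of the Fubini-Study metric
               adapted to the complex structure (so g_4 = a * sum f^i (x) f^i)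
     4,5,6   : beta^1, beta^2, beta^3 (left-invariant coframe on SU_2). *)
From HB Require Import structures.
From mathcomp Require Import all_boot all_order all_algebra.
Set Implicit Arguments. Unset Strict Implicit. Unset Printing Implicit Defensive.
Import Order.TTheory GRing.Theory Num.Theory.
Local Open Scope ring_scope.

Notation form7 R := {ffun {set 'I_7} -> R%type}.

Section Forms.
Variable R : rcfType.

Local Notation form := {ffun {set 'I_7} -> R}.

Definition fscale (x : R) (al : form) : form := [ffun K => x * al K].

(* e_I = e^{i1} /\ ... /\ e^{ik}, i1 < ... < ik *)
Definition ebasis (I : {set 'I_7}) : form := [ffun K => (K == I)%:R].

(* sign of the shuffle: e_I /\ e_J = sgnIJ I J e_(I u J) for disjoint I, J *)
Definition inversion_pair (I J : {set 'I_7}) (p : 'I_7 * 'I_7) : bool :=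
  (p.1 \in I) && (p.2 \in J) && (p.2 < p.1)%N.

Definition sgnIJ (I J : {set 'I_7}) : R :=
  (-1) ^+ #|[set p | inversion_pair I J p]|.

Definition wedge (al be : form) : form :=
  [ffun K => \sum_(I : {set 'I_7}) \sum_(J : {set 'I_7} |
       (I :&: J == set0) && (I :|: J == K)) sgnIJ I J * al I * be J].

Definition e1 (i : nat) : form := ebasis [set (inord i : 'I_7)].
Definition e2 (i j : nat) : form := wedge (e1 i) (e1 j).

(* exterior derivative on basic 1-forms:
   d f^i := 0 (only used through omega, which is closed),
   d beta^1 = - beta^2 /\ beta^3, d beta^2 = - beta^3 /\ beta^1,
   d beta^3 = - beta^1 /\ beta^2 *)
Definition d1 (k : 'I_7) : form :=
  match val k with
  | 4 => - e2 5 6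
  | 5 => - e2 6 4
  | 6 => - e2 4 5
  | _ => 0
  end.

(* Leibniz rule: d e_I = sum_{k in I} (-1)^{#{i in I, i<k}} d e^k /\ e_(I\k) *)
Definition dbasis (I : {set 'I_7}) : form :=
  \sum_(k in I) fscale ((-1) ^+ #|[set i in I | (i < k)%N]|) (wedge (d1 k) (ebasis (I :\ k))).

Definition dform (al : form) : form := \sum_(I : {set 'I_7}) fscale (al I) (dbasis I).

Variables (a c1 c2 c3 : R).

(* inverse metric g^{ii} on the coframe of g = a g_FS + sum c_i beta^i (x) beta^i *)
Definition ginv (i : 'I_7) : R :=
  match val i with
  | 4 => c1^-1 | 5 => c2^-1 | 6 => c3^-1 | _ => a^-1 end.

(* <al, be> = (1/k!) g(al, be) : the basis e_I is orthogonal with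
   <e_I, e_I> = prod_{i in I} g^{ii} *)
Definition inner (al be : form) : R :=
  \sum_(I : {set 'I_7}) al I * be I * \prod_(i in I) ginv i.

(* Kahler form of (CP^2, g_4), omega = a (f^1 f^2 - f^3 f^4), which is
   anti-self-dual for vol_4 = a^2 f^1 f^2 f^3 f^4 *)
Definition omega : form := fscale a (e2 0 1 - e2 2 3).
Definition vol4 : form := fscale (a ^+ 2) (ebasis [set i : 'I_7 | (i < 4)%N]).
Definition vol3 : form := fscale (Num.sqrt (c1 * c2 * c3)) (ebasis [set i : 'I_7 | (4 <= i)%N]).
Definition vol7 : form := wedge vol4 vol3.
Definition volcoef : R := a ^+ 2 * Num.sqrt (c1 * c2 * c3).

(* Hodge star: the linear map with al /\ *be = <al,be> vol7, i.e.
   * e_J = <e_J,e_J> volcoef sgn(J, J^c) e_(J^c) *)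
Definition star (al : form) : form :=
  \sum_(J : {set 'I_7}) fscale (al J * (\prod_(i in J) ginv i) * volcoef * sgnIJ J (~: J))
     (ebasis (~: J)).

Definition theta (t1 t2 t3 : R) : form := fscale t1 (e1 4) + fscale t2 (e1 5) + fscale t3 (e1 6).

Definition invariant3 (phi : form) : Prop :=
  exists t1 t2 t3 b, phi = wedge omega (theta t1 t2 t3) + fscale b vol3.

Definition special (f : R) (phi : form) : Prop :=
  dform (star phi) = 0 /\ dform phi = fscale f (star phi).

End Forms.

(* Main.v *)
Require Import Defs.
From HB Require Import structures.
From mathcomp Require Import all_boot all_order all_algebra.
From mathcomp Require Import ring lra.
Import Order.TTheory GRing.Theory Num.Theory.
Local Open Scope ring_scope.
Set Implicit Arguments. Unset Strict Implicit. Unset Printing Implicit Defensive.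

Definition idx7 : seq nat := iota 0 7.
Fixpoint sumN (s : seq nat) : nat := if s is x :: s' then Nat.add x (sumN s') else 0%N.
Definition Sb (l : seq bool) : {set 'I_7} := [set i : 'I_7 | nth false l i].
Definition orl (l m : seq bool) := [seq nth false l i || nth false m i | i <- idx7].
Definition cpl (l : seq bool) := [seq ~~ nth false l i | i <- idx7].
Definition del (l : seq bool) k := [seq nth false l i && ~~ Nat.eqb i k | i <- idx7].
Definition disjb (l m : seq bool) := all (fun i => ~~ (nth false l i && nth false m i)) idx7.
Definition invb (l m : seq bool) : nat :=
  sumN [seq sumN [seq nat_of_bool [&& nth false l i, nth false m j & Nat.ltb j i] | j <- idx7] | i <- idx7].
Definition cntlt (l : seq bool) k : nat := sumN [seq nat_of_bool (nth false l j && Nat.ltb j k) | j <- idx7].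
Definition eql (l m : seq bool) := all (fun i => Bool.eqb (nth false l i) (nth false m i)) idx7.
Definition onehot k := [seq Nat.eqb i k | i <- idx7].

Lemma sumN_big (s : seq nat) : sumN s = (\sum_(x <- s) x)%N.
Proof. elim: s => [|x s IH] /=; first by rewrite big_nil. by rewrite big_cons IH. Qed.

Lemma sum7 (F : nat -> nat) : (\sum_(i < 7) F i)%N = sumN [seq F i | i <- idx7].
Proof. by rewrite sumN_big big_map -(big_mkord xpredT). Qed.

Lemma ltbE (i j : nat) : Nat.ltb i j = (i < j)%N.
Proof. by apply/idP/idP => [/PeanoNat.Nat.ltb_lt/ssrnat.ltP|/ssrnat.ltP/PeanoNat.Nat.ltb_lt]. Qed.

Lemma eqbE (i j : nat) : Nat.eqb i j = (i == j).
Proof. by apply/idP/eqP => [/PeanoNat.Nat.eqb_eq|/PeanoNat.Nat.eqb_eq]. Qed.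

Lemma nth_idx7 (T : Type) (x0 : T) (F : nat -> T) (i : 'I_7) :
  nth x0 [seq F j | j <- idx7] i = F i.
Proof. by rewrite (nth_map 0%N) ?size_iota // nth_iota. Qed.

Lemma in_Sb l (i : 'I_7) : (i \in Sb l) = nth false l i.
Proof. by rewrite inE. Qed.

Lemma Sb_disj l m : (Sb l :&: Sb m == set0) = disjb l m.
Proof.
apply/idP/idP => [/eqP H|/allP H].
  apply/allP => i; rewrite mem_iota add0n => /andP[_ hi].
  have := in_set0 (Ordinal hi); rewrite -H !inE; by move/negbT.
apply/eqP; apply/setP => i; rewrite !inE; apply/negbTE; apply: H.
by rewrite mem_iota /=.
Qed.

Lemma Sb_U l m : Sb l :|: Sb m = Sb (orl l m).
Proof. by apply/setP => i; rewrite !inE nth_idx7. Qed.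

Lemma Sb_C l : ~: Sb l = Sb (cpl l).
Proof. by apply/setP => i; rewrite !inE nth_idx7. Qed.

Lemma Sb_D l k : (k < 7)%N -> Sb l :\ inord k = Sb (del l k).
Proof.
move=> hk; apply/setP => i; rewrite !inE nth_idx7 eqbE andbC.
by rewrite -val_eqE /= inordK.
Qed.

Lemma Sb_eq l m : (Sb l == Sb m) = eql l m.
Proof.
apply/idP/idP => [/eqP H|/allP H].
  apply/allP => i; rewrite mem_iota add0n => /andP[_ hi].
  have := congr1 (fun A : {set 'I_7} => Ordinal hi \in A) H; rewrite /= !inE /= => ->.
  by case: (nth false m i).
apply/eqP; apply/setP => i; rewrite !inE.
have := H i; rewrite mem_iota /= ltn_ord => /(_ isT).
by case: (nth false l i); case: (nth false m i).
Qed.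

Lemma inv_card l m : #|[set p | inversion_pair (Sb l) (Sb m) p]| = invb l m.
Proof.
rewrite -[LHS]muln1 -sum_nat_cond_const big_mkcond /=.
transitivity (\sum_(i < 7) \sum_(j < 7)
   nat_of_bool [&& nth false l i, nth false m j & Nat.ltb j i])%N.
  rewrite pair_bigA; apply: eq_bigr => -[i j] _ /=.
  rewrite /inversion_pair /= !in_Sb ltbE -andbA; by case: (_ && _).
rewrite /invb -sum7; apply: eq_bigr => i _; by rewrite -sum7.
Qed.

Lemma cnt_card l k : (k < 7)%N -> #|[set i in Sb l | (i < (inord k : 'I_7))%N]| = cntlt l k.
Proof.
move=> hk; rewrite -[LHS]muln1 -sum_nat_cond_const big_mkcond /=.
rewrite /cntlt -sum7; apply: eq_bigr => i _; rewrite !inE ltbE inordK //; by case: (_ && _).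
Qed.

Lemma Sb_Do l (k : 'I_7) : Sb l :\ k = Sb (del l k).
Proof. by rewrite -[k in LHS]inord_val Sb_D. Qed.

Lemma cnt_cardo l (k : 'I_7) : #|[set i in Sb l | (i < k)%N]| = cntlt l k.
Proof. by rewrite -cnt_card // inordK. Qed.

Lemma signE (R : nzRingType) n : (-1) ^+ n = (if odd n then -1 else 1 : R).
Proof. by rewrite -signr_odd; case: odd; rewrite ?expr1 ?expr0. Qed.

Lemma sumR7 (V : nmodType) (F : nat -> V) :
  \sum_(i < 7) F i = foldr (fun i acc => F i + acc) 0 idx7.
Proof. by rewrite -(big_mkord xpredT) /idx7 /index_iota /= !big_cons big_nil. Qed.

Lemma prodR7 (R : pzSemiRingType) (F : nat -> R) :
  \prod_(i < 7) F i = foldr (fun i acc => F i * acc) 1 idx7.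
Proof. by rewrite -(big_mkord xpredT) /idx7 /index_iota /= !big_cons big_nil. Qed.

Section Forms.
Variable R : rcfType.
Local Notation form := {ffun {set 'I_7} -> R}.
Definition eb (l : seq bool) : form := ebasis R (Sb l).

Lemma fscaleA a b (x : form) : fscale a (fscale b x) = fscale (a * b) x.
Proof. by apply/ffunP => K; rewrite !ffunE mulrA. Qed.
Lemma fscale1 (x : form) : fscale 1 x = x.
Proof. by apply/ffunP => K; rewrite !ffunE mul1r. Qed.
Lemma fscaleN1 (x : form) : fscale (-1) x = - x.
Proof. by apply/ffunP => K; rewrite !ffunE mulN1r. Qed.
Lemma fscale0 (x : form) : fscale 0 x = 0.
Proof. by apply/ffunP => K; rewrite !ffunE mul0r. Qed.
Lemma fscaler0 c : fscale c (0 : form) = 0.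
Proof. by apply/ffunP => K; rewrite !ffunE mulr0. Qed.
Lemma fscaleDr c (x y : form) : fscale c (x + y) = fscale c x + fscale c y.
Proof. by apply/ffunP => K; rewrite !ffunE mulrDr. Qed.
Lemma fscaleNr c (x : form) : fscale c (- x) = - fscale c x.
Proof. by apply/ffunP => K; rewrite !ffunE mulrN. Qed.
Lemma fscaleDl a b (x : form) : fscale (a + b) x = fscale a x + fscale b x.
Proof. by apply/ffunP => K; rewrite !ffunE mulrDl. Qed.
Lemma fscale_sum I (r : seq I) (P : pred I) c (F : I -> form) :
  fscale c (\sum_(i <- r | P i) F i) = \sum_(i <- r | P i) fscale c (F i).
Proof. by apply/ffunP => K; rewrite ffunE !sum_ffunE mulr_sumr; apply: eq_bigr => i _; rewrite ffunE. Qed.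

Lemma addE (x y : form) K : (x + y) K = x K + y K.
Proof. by rewrite !ffunE. Qed.
Lemma oppE (x : form) K : (- x) K = - x K.
Proof. by rewrite !ffunE. Qed.
Lemma scaleE c (x : form) K : (fscale c x) K = c * x K.
Proof. by rewrite !ffunE. Qed.
Lemma zeroE K : (0 : form) K = 0.
Proof. by rewrite !ffunE. Qed.
Lemma ebE l m : eb l (Sb m) = if eql m l then 1 else 0.
Proof. by rewrite /eb /ebasis ffunE Sb_eq; case: eql. Qed.

Lemma wedgeDl (x y z : form) : wedge (x + y) z = wedge x z + wedge y z.
Proof.
apply/ffunP => K; rewrite !ffunE -big_split; apply: eq_bigr => I _.
by rewrite -big_split; apply: eq_bigr => J _; rewrite !ffunE mulrDr mulrDl.
Qed.
Lemma wedgeDr (x y z : form) : wedge z (x + y) = wedge z x + wedge z y.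
Proof.
apply/ffunP => K; rewrite !ffunE -big_split; apply: eq_bigr => I _.
by rewrite -big_split; apply: eq_bigr => J _; rewrite !ffunE mulrDr.
Qed.
Lemma wedgeZl c (x z : form) : wedge (fscale c x) z = fscale c (wedge x z).
Proof.
apply/ffunP => K; rewrite !ffunE mulr_sumr; apply: eq_bigr => I _.
rewrite mulr_sumr; apply: eq_bigr => J _; rewrite !ffunE; ring.
Qed.
Lemma wedgeZr c (x z : form) : wedge z (fscale c x) = fscale c (wedge z x).
Proof.
apply/ffunP => K; rewrite !ffunE mulr_sumr; apply: eq_bigr => I _.
rewrite mulr_sumr; apply: eq_bigr => J _; rewrite !ffunE; ring.
Qed.
Lemma wedgeNl (x z : form) : wedge (- x) z = - wedge x z.
Proof. by rewrite -fscaleN1 wedgeZl fscaleN1. Qed.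
Lemma wedgeNr (x z : form) : wedge z (- x) = - wedge z x.
Proof. by rewrite -fscaleN1 wedgeZr fscaleN1. Qed.
Lemma wedge0l (z : form) : wedge 0 z = 0.
Proof. by rewrite -[in LHS](fscale0 0) wedgeZl fscale0. Qed.
Lemma wedge0r (z : form) : wedge z 0 = 0.
Proof. by rewrite -[in LHS](fscale0 0) wedgeZr fscale0. Qed.

Lemma wedge_ebasis I J : wedge (ebasis R I) (ebasis R J) =
  if I :&: J == set0 then fscale (sgnIJ R I J) (ebasis R (I :|: J)) else 0.
Proof.
apply/ffunP => K; rewrite /wedge /ebasis ffunE (bigD1 I) //=.
rewrite [X in _ + X]big1 ?addr0; last first.
  move=> I' /negbTE hI; apply: big1 => J' _; rewrite !ffunE hI /= mulr0n mulr0 mul0r //.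
rewrite big_mkcond (bigD1 J) //= big1 ?addr0; last first.
  move=> J' /negbTE hJ; rewrite !ffunE hJ /= mulr0n mulr0; by case: ifP.
rewrite !ffunE !eqxx /= mulr1 mulr1.
case: (boolP (I :&: J == set0)) => h1 /=; last by rewrite zeroE.
rewrite scaleE ffunE [K == _]eq_sym; case: (_ == K) => /=; by rewrite ?mulr1n ?mulr0n ?mulr1 ?mulr0.
Qed.

Lemma wedge_eb l m : wedge (eb l) (eb m) =
  if disjb l m then fscale (if odd (invb l m) then -1 else 1) (eb (orl l m)) else 0.
Proof.
by rewrite /eb wedge_ebasis Sb_disj Sb_U /sgnIJ inv_card signE.
Qed.

Lemma e1E i : (i < 7)%N -> e1 R i = eb (onehot i).
Proof.
move=> hi; rewrite /e1 /eb; congr ebasis; apply/setP => j.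
by rewrite !inE nth_idx7 eqbE -val_eqE /= inordK.
Qed.

Definition d1n (k : nat) : form :=
  match k with
  | 4 => - wedge (eb (onehot 5)) (eb (onehot 6))
  | 5 => - wedge (eb (onehot 6)) (eb (onehot 4))
  | 6 => - wedge (eb (onehot 4)) (eb (onehot 5))
  | _ => 0 end.

Lemma d1E (k : 'I_7) : d1 R k = d1n k.
Proof. by case: k => [[|[|[|[|[|[|[|//]]]]]]] ?]; rewrite /d1 /d1n /= /e2 ?e1E. Qed.
Definition DB l k : form := if nth false l k then
   fscale (if odd (cntlt l k) then -1 else 1) (wedge (d1n k) (eb (del l k))) else 0.

Lemma dbasis_Sb l : dbasis R (Sb l) = foldr (fun k acc => DB l k + acc) 0 idx7.
Proof.
rewrite /dbasis big_mkcond /=.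
transitivity (\sum_(k < 7) DB l k); last exact: sumR7.
apply: eq_bigr => k _.
rewrite in_Sb /DB; case: nth => //.
by rewrite cnt_cardo Sb_Do signE d1E.
Qed.

Lemma dformD (x y : form) : dform (x + y) = dform x + dform y.
Proof. rewrite /dform -big_split; apply: eq_bigr => I _; by rewrite ffunE fscaleDl. Qed.
Lemma dformZ c (x : form) : dform (fscale c x) = fscale c (dform x).
Proof. rewrite /dform fscale_sum; apply: eq_bigr => I _; by rewrite ffunE fscaleA. Qed.
Lemma dformN (x : form) : dform (- x) = - dform x.
Proof. by rewrite -fscaleN1 dformZ fscaleN1. Qed.
Lemma dform0 : dform (0 : form) = 0.
Proof. by rewrite -[in LHS](fscale0 0) dformZ fscale0. Qed.
Lemma dform_eb l : dform (eb l) = dbasis R (Sb l).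
Proof.
rewrite /dform (bigD1 (Sb l)) //= big1 ?addr0.
  by rewrite /eb /ebasis ffunE eqxx fscale1.
by move=> I /negbTE hI; rewrite /eb /ebasis ffunE hI fscale0.
Qed.

Variables (a c1 c2 c3 : R).
Definition ginvn (i : nat) : R :=
  match i with 4 => c1^-1 | 5 => c2^-1 | 6 => c3^-1 | _ => a^-1 end.
Definition PG l := foldr (fun i acc => (if nth false l i then ginvn i else 1) * acc) 1 idx7.

Lemma PG_prod l : \prod_(i in Sb l) ginv a c1 c2 c3 i = PG l.
Proof.
rewrite big_mkcond /= /PG.
transitivity (\prod_(k < 7) (fun i => if nth false l i then ginvn i else 1) k); last exact: prodR7.
by apply: eq_bigr => k _; rewrite in_Sb.
Qed.

Lemma starD (x y : form) : star a c1 c2 c3 (x + y) = star a c1 c2 c3 x + star a c1 c2 c3 y.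
Proof. rewrite /star -big_split; apply: eq_bigr => I _; by rewrite ffunE !mulrDl fscaleDl. Qed.
Lemma starZ c (x : form) : star a c1 c2 c3 (fscale c x) = fscale c (star a c1 c2 c3 x).
Proof. rewrite /star fscale_sum; apply: eq_bigr => I _; by rewrite ffunE fscaleA !mulrA. Qed.
Lemma starN (x : form) : star a c1 c2 c3 (- x) = - star a c1 c2 c3 x.
Proof. by rewrite -fscaleN1 starZ fscaleN1. Qed.
Lemma star0 : star a c1 c2 c3 (0 : form) = 0.
Proof. by rewrite -[in LHS](fscale0 0) starZ fscale0. Qed.
Lemma star_eb l : star a c1 c2 c3 (eb l) =
  fscale (PG l * volcoef a c1 c2 c3 * (if odd (invb l (cpl l)) then -1 else 1)) (eb (cpl l)).
Proof.
rewrite /star (bigD1 (Sb l)) //= [X in _ + X]big1 ?addr0.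
  by rewrite /eb /ebasis ffunE eqxx mul1r PG_prod /sgnIJ Sb_C inv_card signE.
by move=> I /negbTE hI; rewrite /eb /ebasis ffunE hI !mul0r fscale0.
Qed.





Definition sgn n : R := if odd n then -1 else 1.
Definition toF (s : seq (R * seq bool)) : form := foldr (fun p acc => fscale p.1 (eb p.2) + acc) 0 s.
Definition scaleL c (s : seq (R * seq bool)) := map (fun p => (c * p.1, p.2)) s.
Definition w1 (p : R * seq bool) (s : seq (R * seq bool)) :=
  flatten (map (fun q => if disjb p.2 q.2 then [:: (p.1 * q.1 * sgn (invb p.2 q.2), orl p.2 q.2)] else [::]) s).
Definition wedgeL (s1 s2 : seq (R * seq bool)) := flatten (map (fun p => w1 p s2) s1).
Definition d1L (k : nat) : seq (R * seq bool) :=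
  match k with
  | 4 => scaleL (-1) (wedgeL [:: (1, onehot 5)] [:: (1, onehot 6)])
  | 5 => scaleL (-1) (wedgeL [:: (1, onehot 6)] [:: (1, onehot 4)])
  | 6 => scaleL (-1) (wedgeL [:: (1, onehot 4)] [:: (1, onehot 5)])
  | _ => [::] end.
Definition dbL l := flatten (map (fun k => if nth false l k then
   scaleL (sgn (cntlt l k)) (wedgeL (d1L k) [:: (1, del l k)]) else [::]) idx7).
Definition dL (s : seq (R * seq bool)) := flatten (map (fun p => scaleL p.1 (dbL p.2)) s).
Definition starL (s : seq (R * seq bool)) :=
  map (fun p => (p.1 * (PG p.2 * volcoef a c1 c2 c3 * sgn (invb p.2 (cpl p.2))), cpl p.2)) s.
Definition evalL (s : seq (R * seq bool)) m := foldr (fun p acc => (if eql m p.2 then p.1 else 0) + acc) 0 s.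

Lemma toF_cat s1 s2 : toF (s1 ++ s2) = toF s1 + toF s2.
Proof. by elim: s1 => [|p s1 IH] /=; rewrite ?add0r // IH addrA. Qed.
Lemma toF_flatten (ss : seq (seq (R * seq bool))) :
  toF (flatten ss) = foldr (fun s acc => toF s + acc) 0 ss.
Proof. by elim: ss => [|s ss IH] //=; rewrite toF_cat IH. Qed.
Lemma toF_scale c s : toF (scaleL c s) = fscale c (toF s).
Proof. by elim: s => [|p s IH] /=; rewrite ?fscaler0 // IH fscaleDr fscaleA. Qed.
Lemma toF1 c l : toF [:: (c, l)] = fscale c (eb l).
Proof. by rewrite /= addr0. Qed.

Lemma w1E p s : fscale p.1 (wedge (eb p.2) (toF s)) = toF (w1 p s).
Proof.
elim: s => [|q s IH] /=; first by rewrite wedge0r fscaler0.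
rewrite wedgeDr wedgeZr fscaleDr IH toF_cat wedge_eb fscaleA; congr (_ + _).
case: disjb => /=; last by rewrite fscaler0.
by rewrite addr0 fscaleA /sgn.
Qed.

Lemma wedge_toF s1 s2 : wedge (toF s1) (toF s2) = toF (wedgeL s1 s2).
Proof.
elim: s1 => [|p s1 IH] /=; first by rewrite wedge0l.
by rewrite wedgeDl wedgeZl IH toF_cat w1E.
Qed.

Arguments toF : simpl never.
Arguments scaleL : simpl never.
Arguments wedgeL : simpl never.
Arguments wedge : simpl never.
Arguments eb : simpl never.
Arguments fscale : simpl never.
Lemma d1nE k : d1n k = toF (d1L k).
Proof.
rewrite /d1n /d1L.
do 7?[case: k => [|k]] => //=; by rewrite toF_scale -wedge_toF !toF1 !fscale1 fscaleN1.
Qed.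

Lemma dbasisE l : dbasis R (Sb l) = toF (dbL l).
Proof.
rewrite dbasis_Sb /dbL toF_flatten; elim: idx7 => [|k ks IH] //=.
rewrite IH; congr (_ + _); rewrite /DB; case: nth => //.
by rewrite toF_scale -wedge_toF toF1 fscale1 d1nE /sgn.
Qed.

Lemma dform_toF s : dform (toF s) = toF (dL s).
Proof.
elim: s => [|p s IH] /=; first by rewrite dform0.
by rewrite dformD dformZ IH toF_cat toF_scale dform_eb dbasisE.
Qed.

Lemma star_toF s : star a c1 c2 c3 (toF s) = toF (starL s).
Proof.
elim: s => [|p s IH] /=; first by rewrite star0.
by rewrite starD starZ IH star_eb fscaleA /sgn.
Qed.

Lemma toF_at s K : toF s K = foldr (fun p acc => (if K == Sb p.2 then p.1 else 0) + acc) 0 s.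
Proof.
elim: s => [|p s IH] /=; first by rewrite zeroE.
rewrite addE IH scaleE /eb /ebasis ffunE; congr (_ + _).
by case: (K == _); rewrite ?mulr1 ?mulr0.
Qed.

Lemma evalLE s m : toF s (Sb m) = evalL s m.
Proof.
rewrite toF_at /evalL; elim: s => [|p s IH] //=; by rewrite IH Sb_eq.
Qed.

Lemma toF_ext s s' : (forall l, l \in map snd (s ++ s') -> evalL s l = evalL s' l) -> toF s = toF s'.
Proof.
move=> H; apply/ffunP => K.
case: (boolP (has (fun l => K == Sb l) (map snd (s ++ s')))) => [/hasP[l hl /eqP ->]|hn].
  by rewrite !evalLE H.
have hz t : {subset map snd t <= map snd (s ++ s')} -> toF t K = 0.
  elim: t => [|p t IH] hsub /=; first by rewrite zeroE.
  rewrite addE IH; last by move=> x hx; apply: hsub; rewrite inE hx orbT.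
  rewrite scaleE /eb /ebasis ffunE.
  have /negbTE -> : K != Sb p.2.
    apply/negP => /eqP hK; move/hasP: hn; apply; exists p.2; last by rewrite hK.
    by apply: hsub; rewrite inE eqxx.
  by rewrite mulr0n mulr0 addr0.
rewrite !hz // => x hx; rewrite map_cat mem_cat hx ?orbT //.
Qed.

End Forms.

Lemma vol3E (R : rcfType) (c1 c2 c3 : R) : vol3 c1 c2 c3 =
  fscale (Num.sqrt (c1 * c2 * c3)) (eb R [:: false; false; false; false; true; true; true]).
Proof.
rewrite /vol3 /eb; congr fscale; congr ebasis; apply/setP => i; rewrite !inE.
by case: i => [[|[|[|[|[|[|[|//]]]]]]] ?].
Qed.

Lemma all_in (P : seq bool -> Prop) (L : seq (seq bool)) :
  foldr (fun l acc => P l /\ acc) True L -> forall l, l \in L -> P l.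
Proof.
elim: L => [|x L IH] //= [hx hL] l; rewrite inE => /orP[/eqP ->|] //.
exact: IH.
Qed.

Definition oh := onehot.
Definition v3 := [:: false; false; false; false; true; true; true].
Definition omegaL (R : rcfType) (a : R) := scaleL a (wedgeL [:: (1, oh 0)] [:: (1, oh 1)] ++ scaleL (-1) (wedgeL [:: (1, oh 2)] [:: (1, oh 3)])).
Definition thetaL (R : rcfType) (t1 t2 t3 : R) := [:: (t1, oh 4); (t2, oh 5); (t3, oh 6)].

Lemma wedgeE (R : rcfType) (a t1 t2 t3 : R) :
  wedge (omega a) (theta t1 t2 t3) = toF (wedgeL (omegaL a) (thetaL t1 t2 t3)).
Proof.
rewrite -wedge_toF; congr wedge.
  rewrite /omega /omegaL /e2 !e1E // toF_scale toF_cat toF_scale -!wedge_toF !toF1 !fscale1.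
  by rewrite fscaleN1.
by rewrite /theta !e1E // /toF /= addr0 addrA.
Qed.

Lemma phiE (R : rcfType) (a c1 c2 c3 t1 t2 t3 b : R) :
  wedge (omega a) (theta t1 t2 t3) + fscale b (vol3 c1 c2 c3) =
  toF (wedgeL (omegaL a) (thetaL t1 t2 t3) ++ [:: (b * Num.sqrt (c1 * c2 * c3), v3)]).
Proof. by rewrite toF_cat toF1 vol3E fscaleA [b * _]mulrC wedgeE. Qed.

Lemma solve_lin (R : rcfType) (x y u k : R) : x = y -> u = k * (x - y) -> u = 0.
Proof. by move=> -> ->; rewrite subrr mulr0. Qed.
Lemma solve_lin2 (R : rcfType) (x y z w u k m : R) : x = y -> z = w -> u = k * (x - y) + m * (z - w) -> u = 0.
Proof. by move=> -> -> ->; rewrite !subrr !mulr0 addr0. Qed.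
Lemma solve_eq (R : rcfType) (x y u k : R) : u = 0 -> x - y = k * u -> x = y.
Proof. by move=> -> /eqP; rewrite mulr0 subr_eq0 => /eqP. Qed.

Ltac cbvL := cbv [dL starL scaleL wedgeL w1 dbL d1L PG ginvn sgn invb cntlt sumN orl cpl del disjb eql onehot oh v3
   idx7 omegaL thetaL evalL iota map flatten foldr cat nth odd Nat.add Nat.ltb Nat.leb Nat.eqb negb andb orb Bool.eqb
   nat_of_bool fst snd all].


Lemma specialE (R : rcfType) (a c1 c2 c3 f : R) sp : special a c1 c2 c3 f (toF sp) <->
  toF (dL (starL a c1 c2 c3 sp)) = toF [::] /\ toF (dL sp) = toF (scaleL f (starL a c1 c2 c3 sp)).
Proof. by rewrite /special star_toF !dform_toF -toF_scale. Qed.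

Unset Implicit Arguments.

Theorem proposition5p1 (R : rcfType) (a c1 c2 c3 : R)
  (ha : 0 < a) (hc1 : 0 < c1) (hc2 : 0 < c2) (hc3 : 0 < c3)
  (f : R) (phi : form7 R) :
  invariant3 a c1 c2 c3 phi ->
  (special a c1 c2 c3 f phi <->
   (if f == 0 then exists b : R, phi = fscale b (vol3 c1 c2 c3)
    else exists t1 t2 t3 : R,
      phi = wedge (omega a) (theta t1 t2 t3) /\
      (f - Num.sqrt (c1 / (c2 * c3))) * t1 = 0 /\
      (f - Num.sqrt (c2 / (c3 * c1))) * t2 = 0 /\
      (f - Num.sqrt (c3 / (c1 * c2))) * t3 = 0)).
Proof.
have a0 : a != 0 by rewrite gt_eqF.
have c10 : c1 != 0 by rewrite gt_eqF.
have c20 : c2 != 0 by rewrite gt_eqF.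
have c30 : c3 != 0 by rewrite gt_eqF.
have s0 : 0 < Num.sqrt (c1 * c2 * c3) by rewrite sqrtr_gt0 !mulr_gt0.
have sn0 : Num.sqrt (c1 * c2 * c3) != 0 by rewrite gt_eqF.
have hs : Num.sqrt (c1 * c2 * c3) ^+ 2 = c1 * c2 * c3 by rewrite sqr_sqrtr // ltW // !mulr_gt0.
have q : forall x y z, 0 < x -> 0 < y -> 0 < z -> x * y * z = c1 * c2 * c3 ->
    Num.sqrt (x / (y * z)) = x / Num.sqrt (c1 * c2 * c3).
  move=> x y z hx hy hz E.
  have -> : x / (y * z) = (x / Num.sqrt (c1 * c2 * c3)) ^+ 2.
    rewrite expr_div_n hs -E; field.
    by rewrite !gt_eqF.
  by rewrite sqrtr_sqr ger0_norm // ltW // divr_gt0.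
rewrite (q c1 c2 c3) // (q c2 c3 c1) //; last by ring.
rewrite (q c3 c1 c2) //; last by ring.
move=> [t1 [t2 [t3 [b Hphi]]]]; split.
- rewrite Hphi phiE specialE => -[_ H2].
  have e1 := congr1 (fun x : form7 R => x (Sb [:: true; true; false; false; false; true; true])) H2.
  have e2 := congr1 (fun x : form7 R => x (Sb [:: true; true; false; false; true; false; true])) H2.
  have e3 := congr1 (fun x : form7 R => x (Sb [:: true; true; false; false; true; true; false])) H2.
  have e0 := congr1 (fun x : form7 R => x (Sb [:: true; true; true; true; false; false; false])) H2.
  move: e1 e2 e3 e0; cbv beta; rewrite !evalLE; cbvL; rewrite /volcoef => e1 e2 e3 e0.
  have h1 : t1 * (c1 - f * Num.sqrt (c1 * c2 * c3)) = 0.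
    by apply: (solve_lin (k := -(c1 / a)) e1); field; rewrite ?a0 ?c10 ?c20 ?c30 ?sn0.
  have h2 : t2 * (c2 - f * Num.sqrt (c1 * c2 * c3)) = 0.
    by apply: (solve_lin (k := c2 / a) e2); field; rewrite ?a0 ?c10 ?c20 ?c30 ?sn0.
  have h3 : t3 * (c3 - f * Num.sqrt (c1 * c2 * c3)) = 0.
    by apply: (solve_lin (k := -(c3 / a)) e3); field; rewrite ?a0 ?c10 ?c20 ?c30 ?sn0.
  have h0 : f * b = 0.
    by apply: (solve_lin2 (k := -(a ^+ 2)^-1) (m := -(f * b / (c1 * c2 * c3))) e0 hs); field; rewrite ?a0 ?c10 ?c20 ?c30 ?sn0.
  clear e1 e2 e3 e0 H2 Hphi.
  case: ifP => hf.
    move/eqP: hf => hf; rewrite hf !mul0r !subr0 in h1 h2 h3.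
    move/eqP: h1; rewrite mulf_eq0 (negbTE c10) orbF => /eqP ?; subst t1.
    move/eqP: h2; rewrite mulf_eq0 (negbTE c20) orbF => /eqP ?; subst t2.
    move/eqP: h3; rewrite mulf_eq0 (negbTE c30) orbF => /eqP ?; subst t3.
    exists b; rewrite vol3E fscaleA -toF1; apply: toF_ext; apply: all_in; cbvL.
    by repeat split; ring.
  have hb : b = 0.
    by move/eqP: h0; rewrite mulf_eq0 hf /= => /eqP.
  subst b; exists t1, t2, t3; split.
    rewrite wedgeE; apply: toF_ext; apply: all_in; cbvL.
    by repeat split; ring.
  split; first by apply: (solve_lin (k := - (Num.sqrt (c1 * c2 * c3))^-1) h1); field; rewrite ?a0 ?c10 ?c20 ?c30 ?sn0.
  split; first by apply: (solve_lin (k := - (Num.sqrt (c1 * c2 * c3))^-1) h2); field; rewrite ?a0 ?c10 ?c20 ?c30 ?sn0.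
  by apply: (solve_lin (k := - (Num.sqrt (c1 * c2 * c3))^-1) h3); field; rewrite ?a0 ?c10 ?c20 ?c30 ?sn0.
- clear Hphi; case: ifP => hf.
    move/eqP: hf => ->; move=> [b' ->].
    rewrite vol3E fscaleA -toF1 specialE.
    split; apply: toF_ext; apply: all_in; cbvL; by repeat split; ring.
  move=> [t1' [t2' [t3' [-> [h1 [h2 h3]]]]]].
  rewrite wedgeE specialE.
  split; apply: toF_ext; apply: all_in; cbvL; rewrite /volcoef; repeat split;
  first [ by apply: (solve_eq (k := a * Num.sqrt (c1 * c2 * c3) / c1) h1); field; rewrite ?a0 ?c10 ?c20 ?c30 ?sn0
        | by apply: (solve_eq (k := - (a * Num.sqrt (c1 * c2 * c3) / c1)) h1); field; rewrite ?a0 ?c10 ?c20 ?c30 ?sn0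
        | by apply: (solve_eq (k := a * Num.sqrt (c1 * c2 * c3) / c2) h2); field; rewrite ?a0 ?c10 ?c20 ?c30 ?sn0
        | by apply: (solve_eq (k := - (a * Num.sqrt (c1 * c2 * c3) / c2)) h2); field; rewrite ?a0 ?c10 ?c20 ?c30 ?sn0
        | by apply: (solve_eq (k := a * Num.sqrt (c1 * c2 * c3) / c3) h3); field; rewrite ?a0 ?c10 ?c20 ?c30 ?sn0
        | by apply: (solve_eq (k := - (a * Num.sqrt (c1 * c2 * c3) / c3)) h3); field; rewrite ?a0 ?c10 ?c20 ?c30 ?sn0 ].
Qed.
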